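(* For every strategy profile $s$ with $S_0(s)\vee S_1(s)$: if $\mathsf{SPE}(s)$ then $\mathsf{SAcBes}(s)\vee\mathsf{SBcAes}(s)$.
   Context: Let $P=\{A,B\}$ and $\mathrm{Choice}=\{d,r\}$; a payoff function is $f:P\to\mathbb{R}$. Strategy profiles are elements of the final coalgebra of $X\mapsto\mathbb{R}^P+P\times\mathrm{Choice}\times X\times X$ (finite or infinite trees $\langle f\rangle$ or $\langle p,c,s_d,s_r\rangle$, equality being bisimilarity). The payoff $\widehat{s}$ is the partial function given by $\widehat{\langle f\rangle}=f$, $\widehat{\langle p,d,s_d,s_r\rangle}=\widehat{s_d}$, $\widehat{\langle p,r,s_d,s_r\rangle}=\widehat{s_r}$. Convergence $\downarrow$: least predicate with $\downarrow(s)$ iff $s=\langle f\rangle$, or $s=\langle p,d,s_d,s_r\rangle\wedge\downarrow(s_d)$, or $s=\langle p,r,s_d,s_r\rangle\wedge\downarrow(s_r)$. Strong convergence $\Downarrow$: greatest predicate with $\Downarrow(s)$ iff $s=\langle f\rangle$, or $s=\langle p,c,s_d,s_r\rangle$ with $\downarrow(s),\Downarrow(s_d),\Downarrow(s_r)$. For a predicate $\Phi$, $\Box\Phi$ is the greatest predicate such that $\Box\Phi(s)$ iff $\Phi(s)$ and, whenever $s=\langle p,c,s_d,s_r\rangle$, $\Box\Phi(s_d)$ and $\Box\Phi(s_r)$. $\mathsf{PE}(s)$ holds iff $\Downarrow(s)$ and (if $s=\langle p,d,s_d,s_r\rangle$ then $\widehat{s_d}(p)\ge\widehat{s_r}(p)$)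 and (if $s=\langle p,r,s_d,s_r\rangle$ then $\widehat{s_r}(p)\ge\widehat{s_d}(p)$); $\mathsf{SPE}=\Box\,\mathsf{PE}$. Let $f_{0,1}=(A\mapsto0,B\mapsto1)$, $f_{1,0}=(A\mapsto1,B\mapsto0)$. $S_0,S_1$ are the greatest predicates with $S_0(s)$ iff $s=\langle A,c,\langle f_{0,1}\rangle,s'\rangle$ with $S_1(s')$, and $S_1(s)$ iff $s=\langle B,c,\langle f_{1,0}\rangle,s'\rangle$ with $S_0(s')$. $\mathsf{AcBes}$ is the least predicate such that $\mathsf{AcBes}(s)$ holds iff: whenever $s=\langle p,c,\langle f\rangle,s'\rangle$, then ($p=A$, $f=f_{0,1}$, $c=r$, $\mathsf{AcBes}(s')$) or ($p=B$, $f=f_{1,0}$, and ($c=d$ or $\mathsf{AcBes}(s')$)). Symmetrically $\mathsf{BcAes}$ is the least predicate such that $\mathsf{BcAes}(s)$ holds iff: whenever $s=\langle p,c,\langle f\rangle,s'\rangle$, then ($p=B$, $f=f_{1,0}$, $c=r$, $\mathsf{BcAes}(s')$) or ($p=A$, $f=f_{0,1}$, and ($c=d$ or $\mathsf{BcAes}(s')$)). $\mathsf{SAcBes}=\Box\,\mathsf{AcBes}$ and $\mathsf{SBcAes}=\Box\,\mathsf{BcAes}$. *)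

(* Defs.v *)
From Stdlib Require Import Reals.
Open Scope R_scope.

Inductive Agent : Type := A | B.
Inductive Choice : Type := d | r.

(* Final coalgebra of X |-> R^P + P x Choice x X x X. *)
CoInductive Strat : Type :=
| Leaf (f : Agent -> R)
| Node (p : Agent) (c : Choice) (sd sr : Strat).

(* The partial payoff function \hat{s}, as a (functional) relation:
   Payoff s f  means  \hat{s} is defined and equals f. *)
Inductive Payoff : Strat -> (Agent -> R) -> Prop :=
| Payoff_leaf f : Payoff (Leaf f) f
| Payoff_d p sd sr f : Payoff sd f -> Payoff (Node p d sd sr) f
| Payoff_r p sd sr f : Payoff sr f -> Payoff (Node p r sd sr) f.

Inductive Conv : Strat -> Prop :=
| Conv_leaf f : Conv (Leaf f)
| Conv_d p sd sr : Conv sd -> Conv (Node p d sd sr)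
| Conv_r p sd sr : Conv sr -> Conv (Node p r sd sr).

CoInductive SConv : Strat -> Prop :=
| SConv_leaf f : SConv (Leaf f)
| SConv_node p c sd sr :
    Conv (Node p c sd sr) -> SConv sd -> SConv sr -> SConv (Node p c sd sr).

CoInductive Box (Phi : Strat -> Prop) : Strat -> Prop :=
| Box_leaf f : Phi (Leaf f) -> Box Phi (Leaf f)
| Box_node p c sd sr :
    Phi (Node p c sd sr) -> Box Phi sd -> Box Phi sr -> Box Phi (Node p c sd sr).

Definition PE (s : Strat) : Prop :=
  SConv s /\
  (forall p sd sr, s = Node p d sd sr ->
     forall fd fr, Payoff sd fd -> Payoff sr fr -> fd p >= fr p) /\
  (forall p sd sr, s = Node p r sd sr ->
     forall fd fr, Payoff sd fd -> Payoff sr fr -> fr p >= fd p).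

Definition SPE : Strat -> Prop := Box PE.

Definition f01 : Agent -> R := fun a => match a with A => 0 | B => 1 end.
Definition f10 : Agent -> R := fun a => match a with A => 1 | B => 0 end.

CoInductive S0 : Strat -> Prop :=
| S0_intro c s' : S1 s' -> S0 (Node A c (Leaf f01) s')
with S1 : Strat -> Prop :=
| S1_intro c s' : S0 s' -> S1 (Node B c (Leaf f10) s').

Inductive AcBes : Strat -> Prop :=
| AcBes_other s : (forall p c f s', s <> Node p c (Leaf f) s') -> AcBes s
| AcBes_A s' : AcBes s' -> AcBes (Node A r (Leaf f01) s')
| AcBes_Bd s' : AcBes (Node B d (Leaf f10) s')
| AcBes_Bc c s' : AcBes s' -> AcBes (Node B c (Leaf f10) s').

Inductive BcAes : Strat -> Prop :=
| BcAes_other s : (forall p c f s', s <> Node p c (Leaf f) s') -> BcAes s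
| BcAes_B s' : BcAes s' -> BcAes (Node B r (Leaf f10) s')
| BcAes_Ad s' : BcAes (Node A d (Leaf f01) s')
| BcAes_Ac c s' : BcAes s' -> BcAes (Node A c (Leaf f01) s').

Definition SAcBes : Strat -> Prop := Box AcBes.
Definition SBcAes : Strat -> Prop := Box BcAes.

(* Main.v *)
Require Import Defs.
From Stdlib Require Import Reals Lra Classical.
Open Scope R_scope.

Definition Comb (s : Strat) : Prop := S0 s \/ S1 s.
Definition lf (p : Agent) : Agent -> R := match p with A => f01 | B => f10 end.

Lemma comb_node p c sd sr : Comb (Node p c sd sr) -> sd = Leaf (lf p) /\ Comb sr.
Proof.
  intros [H|H]; inversion H; subst; simpl; split; auto; unfold Comb; auto.
Qed.

Lemma comb_leaf f : Comb (Leaf f) -> False.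
Proof. intros [H|H]; inversion H. Qed.

Inductive Reach (t : Strat) : Strat -> Prop :=
| R0 : Reach t t
| RS p c sd sr : Reach t sr -> Reach t (Node p c sd sr).

Lemma reach_trans t u s : Reach t u -> Reach u s -> Reach t s.
Proof. intros H1 H2; induction H2; auto; constructor; auto. Qed.

Lemma reach_comb t s : Reach t s -> Comb s -> Comb t.
Proof. induction 1; auto. intros H0; apply comb_node in H0; tauto. Qed.

Lemma reach_spe t s : Reach t s -> SPE s -> SPE t.
Proof. induction 1; auto. intros H0; inversion H0; auto. Qed.

Lemma reach_lin t1 t2 s : Reach t1 s -> Reach t2 s -> Reach t2 t1 \/ Reach t1 t2.
Proof.
  intros H1; revert t2; induction H1; intros t2 H2.
  - auto.
  - inversion H2; subst.
    + right. constructor. auto.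
    + auto.
Qed.

Lemma payoff_fun s f g : Payoff s f -> Payoff s g -> f = g.
Proof. intros H; revert g; induction H; intros g H'; inversion H'; auto. Qed.

Lemma conv_payoff s : Conv s -> exists f, Payoff s f.
Proof.
  induction 1 as [f| p sd sr _ [f Hf] | p sd sr _ [f Hf]]; eexists; constructor; eauto.
Qed.

Lemma payoff_vals s f : Payoff s f -> Comb s -> f = f01 \/ f = f10.
Proof.
  induction 1; intros Hc.
  - exfalso; eapply comb_leaf; eauto.
  - apply comb_node in Hc as [-> _]. inversion H; subst. destruct p; auto.
  - apply comb_node in Hc as [_ Hc]; auto.
Qed.

Lemma spe_conv s : SPE s -> Conv s \/ exists f, s = Leaf f.
Proof.
  intros H; inversion H; subst; eauto.
  destruct H0 as [Hc _]. inversion Hc; auto.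
Qed.

Lemma key (a : Agent) t u : Reach t u -> Comb u -> SPE u ->
  (exists f, Payoff u f /\ f a = 0) ->
  forall x y b, b <> a -> t <> Node b d x y.
Proof.
  induction 1 as [|p c sd sr HR IH]; intros Hc Hs [f [Hf Hfa]] x y b Hb Heq.
  - subst t. apply comb_node in Hc as [-> _].
    inversion Hf; subst; match goal with H: Payoff (Leaf _) _ |- _ => inversion H; subst end.
    destruct a, b; simpl in Hfa; try congruence; unfold f01, f10 in Hfa; lra.
  - destruct (comb_node _ _ _ _ Hc) as [Hsd Hcr].
    inversion Hs as [|? ? ? ? HPE HBd HBr]; subst.
    eapply IH; eauto.
    destruct c.
    + inversion Hf; subst; match goal with H: Payoff (Leaf _) _ |- _ => inversion H; subst end.
      assert (p = a) by (destruct p, a; auto; simpl in Hfa; unfold f01, f10 in Hfa; lra).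
      subst p.
      destruct HPE as [Hsc [Hd _]].
      assert (Hcv' : Conv sr) by (destruct (spe_conv _ HBr) as [?|[? ->]]; [auto|constructor]).
      destruct (conv_payoff _ Hcv') as [f' Hf'].
      exists f'; split; auto.
      specialize (Hd a _ _ eq_refl _ _ (Payoff_leaf _) Hf').
      destruct (payoff_vals _ _ Hf' Hcr) as [->| ->]; destruct a; simpl in *;
        unfold f01, f10 in *; lra.
    + inversion Hf; subst. eauto.
Qed.

Lemma acbes_lem s : Conv s -> Comb s -> (forall t x y, Reach t s -> t <> Node A d x y) -> AcBes s.
Proof.
  induction 1 as [f|p sd sr _|p sd sr _ IH]; intros Hc Hn.
  - constructor. intros; discriminate.
  - destruct (comb_node _ _ _ _ Hc) as [-> _].
    destruct p.
    + exfalso; eapply Hn; [apply R0|reflexivity].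
    + apply AcBes_Bd.
  - destruct (comb_node _ _ _ _ Hc) as [-> Hcr].
    assert (AcBes sr) by (apply IH; auto; intros; apply Hn; constructor; auto).
    destruct p; simpl; [apply AcBes_A|apply AcBes_Bc]; auto.
Qed.

Lemma bcaes_lem s : Conv s -> Comb s -> (forall t x y, Reach t s -> t <> Node B d x y) -> BcAes s.
Proof.
  induction 1 as [f|p sd sr _|p sd sr _ IH]; intros Hc Hn.
  - constructor. intros; discriminate.
  - destruct (comb_node _ _ _ _ Hc) as [-> _].
    destruct p.
    + apply BcAes_Ad.
    + exfalso; eapply Hn; [apply R0|reflexivity].
  - destruct (comb_node _ _ _ _ Hc) as [-> Hcr].
    assert (BcAes sr) by (apply IH; auto; intros; apply Hn; constructor; auto).
    destruct p; simpl; [apply BcAes_Ac|apply BcAes_B]; auto.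
Qed.

CoFixpoint gA s : Comb s -> SPE s -> (forall t x y, Reach t s -> t <> Node A d x y) -> SAcBes s.
Proof.
  intros Hc Hs Hn. destruct s as [f|p c sd sr].
  - constructor. constructor. intros; discriminate.
  - destruct (comb_node _ _ _ _ Hc) as [Hsd Hcr].
    assert (Hsr : SPE sr) by (inversion Hs; auto).
    constructor.
    + apply acbes_lem; auto.
      destruct (spe_conv _ Hs) as [?|[? ?]]; [auto|discriminate].
    + subst sd. constructor. constructor. intros; discriminate.
    + apply gA; auto. intros; apply Hn; constructor; auto.
Qed.

CoFixpoint gB s : Comb s -> SPE s -> (forall t x y, Reach t s -> t <> Node B d x y) -> SBcAes s.
Proof.
  intros Hc Hs Hn. destruct s as [f|p c sd sr].
  - constructor. constructor. intros; discriminate.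
  - destruct (comb_node _ _ _ _ Hc) as [Hsd Hcr].
    assert (Hsr : SPE sr) by (inversion Hs; auto).
    constructor.
    + apply bcaes_lem; auto.
      destruct (spe_conv _ Hs) as [?|[? ?]]; [auto|discriminate].
    + subst sd. constructor. constructor. intros; discriminate.
    + apply gB; auto. intros; apply Hn; constructor; auto.
Qed.

Lemma own_payoff a t x y : Comb t -> t = Node a d x y -> exists f, Payoff t f /\ f a = 0.
Proof.
  intros Hc ->. destruct (comb_node _ _ _ _ Hc) as [-> _].
  exists (lf a); split; [repeat constructor|destruct a; reflexivity].
Qed.

Theorem mainTheorem11 :
  forall s : Strat, (S0 s \/ S1 s) -> SPE s -> SAcBes s \/ SBcAes s.
Proof.
  intros s Hc Hs. fold (Comb s) in Hc.
  destruct (classic (exists t x y, Reach t s /\ t = Node A d x y)) as [[tA [xA [yA [HA EA]]]]|HnA].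
  2:{ left. apply gA; auto. intros t x y H E. apply HnA; eauto. }
  destruct (classic (exists t x y, Reach t s /\ t = Node B d x y)) as [[tB [xB [yB [HB EB]]]]|HnB].
  2:{ right. apply gB; auto. intros t x y H E. apply HnB; eauto. }
  exfalso.
  destruct (reach_lin _ _ _ HA HB) as [H|H].
  - eapply (key A tB tA H (reach_comb _ _ HA Hc) (reach_spe _ _ HA Hs)
      (own_payoff _ _ _ _ (reach_comb _ _ HA Hc) EA) xB yB B); [discriminate|exact EB].
  - eapply (key B tA tB H (reach_comb _ _ HB Hc) (reach_spe _ _ HB Hs)
      (own_payoff _ _ _ _ (reach_comb _ _ HB Hc) EB) xA yA A); [discriminate|exact EA].
Qed.
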